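(* Let $G$ be an orderable group. Then: (1) $\operatorname{Conj}(G)$ is a right orderable quandle. (2) $\operatorname{Core}(G)$ is a left orderable quandle. (3) If $\phi\in\operatorname{Aut}(G)$ is an order reversing automorphism, then $\operatorname{Alex}(G,\phi)$ is a left orderable quandle.
   Context: A group $G$ is orderable if it admits a linear order $<$ such that $x<y$ implies $zx<zy$ and $xz<yz$ for all $x,y,z\in G$; an automorphism $\phi$ of $G$ is order reversing (for such an order) if $x<y$ implies $\phi(y)<\phi(x)$. $\operatorname{Conj}(G)$ is the set $G$ with operation $a*b=b^{-1}ab$; $\operatorname{Core}(G)$ is the set $G$ with operation $a*b=ba^{-1}b$; for $\phi\in\operatorname{Aut}(G)$, $\operatorname{Alex}(G,\phi)$ is the set $G$ with operation $a*b=\phi(ab^{-1})b$; these are quandles. A quandle $Q$ with operation $*$ is right orderable if there is a linear order $<$ on $Q$ such that $x<y$ implies $x*z<y*z$ for all $x,y,z\in Q$, and left orderable if there is a linear order $<$ on $Q$ such that $x<y$ implies $z*x<z*y$ for all $x,y,z\in Q$. *)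

(* Defs.v *)
Definition is_group {G : Type} (mul : G -> G -> G) (e : G) (inv : G -> G) : Prop :=
  (forall x y z, mul (mul x y) z = mul x (mul y z)) /\
  (forall x, mul e x = x) /\ (forall x, mul x e = x) /\
  (forall x, mul (inv x) x = e) /\ (forall x, mul x (inv x) = e).

Definition strict_linear_order {T : Type} (lt : T -> T -> Prop) : Prop :=
  (forall x, ~ lt x x) /\
  (forall x y z, lt x y -> lt y z -> lt x z) /\
  (forall x y, x <> y -> lt x y \/ lt y x).

Definition group_order {G : Type} (mul : G -> G -> G) (lt : G -> G -> Prop) : Prop :=
  strict_linear_order lt /\
  (forall x y z, lt x y -> lt (mul z x) (mul z y) /\ lt (mul x z) (mul y z)).

Definition orderable_group {G : Type} (mul : G -> G -> G) : Prop :=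
  exists lt : G -> G -> Prop, group_order mul lt.

Definition group_automorphism {G : Type} (mul : G -> G -> G) (phi : G -> G) : Prop :=
  (forall x y, phi (mul x y) = mul (phi x) (phi y)) /\
  (forall x y, phi x = phi y -> x = y) /\
  (forall y, exists x, phi x = y).

Definition order_reversing {G : Type} (lt : G -> G -> Prop) (phi : G -> G) : Prop :=
  forall x y, lt x y -> lt (phi y) (phi x).

Definition is_quandle {Q : Type} (op : Q -> Q -> Q) : Prop :=
  (forall x, op x x = x) /\
  (forall y, (forall x1 x2, op x1 y = op x2 y -> x1 = x2) /\ (forall z, exists x, op x y = z)) /\
  (forall x y z, op (op x y) z = op (op x z) (op y z)).

Definition right_orderable {Q : Type} (op : Q -> Q -> Q) : Prop :=
  exists lt : Q -> Q -> Prop, strict_linear_order lt /\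
    (forall x y z, lt x y -> lt (op x z) (op y z)).

Definition left_orderable {Q : Type} (op : Q -> Q -> Q) : Prop :=
  exists lt : Q -> Q -> Prop, strict_linear_order lt /\
    (forall x y z, lt x y -> lt (op z x) (op z y)).

Definition conj_op {G : Type} (mul : G -> G -> G) (inv : G -> G) (a b : G) : G :=
  mul (mul (inv b) a) b.
Definition core_op {G : Type} (mul : G -> G -> G) (inv : G -> G) (a b : G) : G :=
  mul (mul b (inv a)) b.
Definition alex_op {G : Type} (mul : G -> G -> G) (inv : G -> G) (phi : G -> G) (a b : G) : G :=
  mul (phi (mul a (inv b))) b.

(* Main.v *)
Require Import Defs.

Theorem proposition3p4 (G : Type) (mul : G -> G -> G) (e : G) (inv : G -> G)
  (HG : is_group mul e inv) (Hord : orderable_group mul) :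
  (is_quandle (conj_op mul inv) /\ right_orderable (conj_op mul inv)) /\
  (is_quandle (core_op mul inv) /\ left_orderable (core_op mul inv)) /\
  (forall (lt : G -> G -> Prop) (phi : G -> G),
     group_order mul lt -> group_automorphism mul phi -> order_reversing lt phi ->
     is_quandle (alex_op mul inv phi) /\ left_orderable (alex_op mul inv phi)).
Proof.
  destruct HG as (A & L1 & R1 & IL & IR).
  assert (K1 : forall x y, mul (inv x) (mul x y) = y)
    by (intros; rewrite <- A, IL, L1; reflexivity).
  assert (K2 : forall x y, mul x (mul (inv x) y) = y)
    by (intros; rewrite <- A, IR, L1; reflexivity).
  assert (U : forall a b, mul a b = e -> b = inv a).
  { intros a b H. rewrite <- (K1 a b), H, R1. reflexivity. }
  assert (II : forall x, inv (inv x) = x).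
  { intros x. symmetry. apply U. apply IL. }
  assert (IM : forall x y, inv (mul x y) = mul (inv y) (inv x)).
  { intros x y. symmetry. apply U. rewrite A, K2. apply IR. }
  assert (CL : forall a x y, mul a x = mul a y -> x = y).
  { intros a x y H. rewrite <- (K1 a x), H, K1. reflexivity. }
  assert (Rev : forall lt, group_order mul lt -> forall a b, lt a b -> lt (inv b) (inv a)).
  { intros lt [_ M] a b H.
    destruct (M _ _ (inv a) H) as [H1 _]. rewrite IL in H1.
    destruct (M _ _ (inv b) H1) as [_ H2]. rewrite L1, A, IR, R1 in H2. exact H2. }
  destruct Hord as [lt0 [[Irr0 [Tr0 Tot0]] M0]].
  split; [|split].
  - split.
    + split; [|split].
      * intros x. unfold conj_op. rewrite IL, L1. reflexivity.
      * intros y. split.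
        -- unfold conj_op. intros x1 x2 H.
           assert (H' : mul (mul (inv y) x1) (mul y (inv y)) = mul (mul (inv y) x2) (mul y (inv y)))
             by (rewrite <- !A, H; reflexivity).
           rewrite IR, !R1 in H'. apply CL in H'. exact H'.
        -- intros z. exists (mul y (mul z (inv y))). unfold conj_op.
           rewrite K1, A, IL, R1. reflexivity.
      * intros x y z. unfold conj_op.
        repeat progress rewrite ?IM, ?II, ?A, ?K1, ?K2, ?IL, ?IR, ?L1, ?R1.
        reflexivity.
    + exists lt0. split; [split; [|split]; assumption|].
      intros x y z H. unfold conj_op.
      apply M0. apply M0. exact H.
  - split.
    + split; [|split].
      * intros x. unfold core_op. rewrite A, IL, R1. reflexivity.
      * intros y. split.
        -- unfold core_op. intros x1 x2 H.
           rewrite !A in H. apply CL in H.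
           assert (H' : mul (mul (inv x1) y) (inv y) = mul (mul (inv x2) y) (inv y))
             by (rewrite H; reflexivity).
           rewrite !A, !IR, !R1 in H'. rewrite <- (II x1), H', II. reflexivity.
        -- intros z. exists (mul y (mul (inv z) y)). unfold core_op.
           repeat progress rewrite ?IM, ?II, ?A, ?K1, ?K2, ?IL, ?IR, ?L1, ?R1. reflexivity.
      * intros x y z. unfold core_op.
        repeat progress rewrite ?IM, ?II, ?A, ?K1, ?K2, ?IL, ?IR, ?L1, ?R1.
        reflexivity.
    + exists lt0. split; [split; [|split]; assumption|].
      intros x y z H. unfold core_op.
      apply Tr0 with (mul (mul y (inv z)) x).
      * apply M0. apply M0. exact H.
      * apply M0. exact H.
  - intros lt phi Hlt [P [Pinj Psurj]] Hrev.
    assert (Pe : phi e = e).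
    { apply (CL (phi e)). rewrite <- P, !R1. reflexivity. }
    assert (PI : forall x, phi (inv x) = inv (phi x)).
    { intros x. apply U. rewrite <- P, IR. exact Pe. }
    split.
    + split; [|split].
      * intros x. unfold alex_op. rewrite IR, Pe, L1. reflexivity.
      * intros y. split.
        -- unfold alex_op. intros x1 x2 H.
           assert (H' : mul (mul (phi (mul x1 (inv y))) y) (inv y) = mul (mul (phi (mul x2 (inv y))) y) (inv y))
             by (rewrite H; reflexivity).
           rewrite !A, !IR, !R1 in H'. apply Pinj in H'.
           assert (H2 : mul (mul x1 (inv y)) y = mul (mul x2 (inv y)) y) by (rewrite H'; reflexivity).
           rewrite !A, !IL, !R1 in H2. exact H2.
        -- intros z. destruct (Psurj (mul z (inv y))) as [w Hw].
           exists (mul w y). unfold alex_op. rewrite A, IR, R1, Hw, A, IL, R1. reflexivity.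
      * intros x y z. unfold alex_op.
        repeat progress rewrite ?IM, ?II, ?P, ?PI, ?A, ?K1, ?K2, ?IL, ?IR, ?L1, ?R1.
        reflexivity.
    + exists lt. destruct Hlt as [SO M]. split; [exact SO|].
      destruct SO as [Irr [Tr Tot]].
      intros x y z H. unfold alex_op. rewrite !P, !PI, !A.
      apply M.
      assert (H1 : lt (inv (phi x)) (inv (phi y))).
      { apply (Rev lt). split; [split; [|split]|]; assumption. apply Hrev. exact H. }
      apply Tr with (mul (inv (phi y)) x).
      * apply M. exact H1.
      * apply M. exact H.
Qed.
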